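(* Let $n_1,n_2,n_3$ be pairwise coprime positive integers forming a minimal system of generators of $\mathcal S=\langle n_1,n_2,n_3\rangle$. Then for every $\{i,j,k\}=\{1,2,3\}$, $$c_k=\min_{\alpha=1,\dots,I_k}\left\{\alpha n_j-[-n_in_k^{-1}]_{n_j}\left\lfloor \frac{\alpha n_k}{[n_in_j^{-1}]_{n_k}}\right\rfloor\right\},\qquad I_k=\left\lceil [-n_in_k^{-1}]_{n_j}\,\frac{[n_in_j^{-1}]_{n_k}}{n_i}\right\rceil .$$
   Context: $\mathbb N$ denotes the nonnegative integers. For integers $a_1,\dots,a_r$, $\langle a_1,\dots,a_r\rangle=\{\sum t_la_l: t_l\in\mathbb N\}$. Minimal system of generators means that no $n_l$ belongs to the monoid generated by the other two. For an integer $m$ and $n\ge 1$, $[m]_n\in\{0,\dots,n-1\}$ denotes the remainder of $m$ upon division by $n$; for $a$ coprime to $n$, the symbol $a^{-1}$ inside $[\cdot]_n$ denotes a multiplicative inverse of $a$ modulo $n$. For $\{i,j,k\}=\{1,2,3\}$, $\mathcal S_k=\{M\in\mathbb N: Mn_k\in\langle n_i,n_j\rangle\}$ and $c_k=\min(\mathcal S_k\setminus\{0\})$ (the minimal relation for $n_k$). *)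

(* Defs.v *)
From mathcomp Require Import all_boot all_order all_algebra.
Set Implicit Arguments. Unset Strict Implicit. Unset Printing Implicit Defensive.
Import Order.TTheory GRing.Theory Num.Theory.

Definition in_mon2 (a b x : nat) : Prop := exists t1 t2 : nat, x = t1 * a + t2 * b.

Definition minimal_gens3 (n1 n2 n3 : nat) : Prop :=
  ~ in_mon2 n2 n3 n1 /\ ~ in_mon2 n1 n3 n2 /\ ~ in_mon2 n1 n2 n3.

Definition nth3 (n1 n2 n3 : nat) (i : 'I_3) : nat := nth 0 [:: n1; n2; n3] i.

Definition Sk (ni nj nk M : nat) : Prop := in_mon2 ni nj (M * nk).

Definition is_ck (ni nj nk c : nat) : Prop :=
  0 < c /\ Sk ni nj nk c /\ (forall M, 0 < M -> Sk ni nj nk M -> c <= M).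

Definition remZ (m : int) (n : nat) : nat := absz (m %% Posz n)%Z.

Definition is_inv_mod (n a a' : nat) : Prop := a * a' = 1 %[mod n].

(* Main.v *)
Require Import Defs.
From mathcomp Require Import all_boot all_order all_algebra ring zify.
From Stdlib Require Import Classical.
Import Order.TTheory GRing.Theory Num.Theory.

Lemma remZ_nat m n : remZ (Posz m) n = m %% n.
Proof. by rewrite /remZ modz_nat. Qed.

Lemma remZ_neg x n : 0 < n -> remZ (- Posz x)%R n < n /\ n %| remZ (- Posz x)%R n + x.
Proof.
move=> n0; rewrite /remZ.
set m := ((- Posz x) %% Posz n)%Z.
have m0 : (0 <= m)%R by apply: modz_ge0; rewrite eqz_nat -lt0n.
have mn : (m < Posz n)%R by apply: ltz_pmod; rewrite ltz_nat.
have Em : m = Posz `|m|%N by rewrite gez0_abs.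
split; first by rewrite -ltz_nat -Em.
have E := divz_eq (- Posz x) (Posz n).
have -> : (`|m| + x)%N = `|(m + Posz x)%R|%N by rewrite {2}Em -PoszD.
have -> : n = `|Posz n|%N by [].
rewrite -dvdzE.
have -> : (m + Posz x = (- ((- Posz x) %/ Posz n)%Z) * Posz n)%R.
  have E' : m = (- Posz x - ((- Posz x) %/ Posz n)%Z * Posz n)%R.
    by apply/eqP; rewrite eq_sym subr_eq addrC -E.
  rewrite E'; ring.
by apply: dvdz_mull; apply: dvdzz.
Qed.

Lemma ex_min (P : nat -> Prop) n : P n -> exists m, P m /\ forall k, P k -> m <= k.
Proof.
elim/ltn_ind: n => n IH Pn.
case: (classic (exists k, k < n /\ P k)) => [[k [kn Pk]]|H].
  exact: IH kn Pk.
exists n; split=> // k Pk; rewrite leqNgt; apply/negP => kn; apply: H; exists k; done.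
Qed.

Lemma gfacts ni nj nk p q beta : 0 < q -> p*nk + ni = q*nj ->
  p*(beta*nk %/ q) <= beta*nj /\
  q*(beta*nj - p*(beta*nk %/ q)) = beta*ni + p*(beta*nk %% q) /\
  (beta*nj - p*(beta*nk %/ q))*nk = (beta*nk %/ q)*ni + (beta*nk %% q)*nj.
Proof.
move=> q0 key.
set a := beta*nk %/ q; set t := beta*nk %% q.
have Eb : beta*nk = a*q + t := divn_eq _ _.
have E1 : q*(beta*nj) = q*(p*a) + (p*t + beta*ni).
  transitivity (beta*(q*nj)); first ring.
  rewrite -key; transitivity (p*(beta*nk) + beta*ni); first ring.
  rewrite Eb; ring.
have le : p*a <= beta*nj by rewrite -(leq_pmul2l q0) E1 leq_addr.
have E2 : q*(beta*nj - p*a) = beta*ni + p*t by rewrite mulnBr E1 addKn addnC.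
split=> //; split=> //.
apply/eqP; rewrite -(eqn_pmul2l q0); apply/eqP.
transitivity ((beta*ni + p*t)*nk); first by rewrite -E2; ring.
transitivity (a*q*ni + t*(q*nj)); last ring.
rewrite -key; transitivity ((beta*nk)*ni + p*t*nk); first ring.
rewrite Eb; ring.
Qed.


Lemma core ni nj nk u v : 0 < ni -> 0 < nj -> 0 < nk -> ~ in_mon2 nj nk ni ->
  is_inv_mod nj nk u -> is_inv_mod nk nj v ->
  let p := remZ (- Posz (ni * u))%R nj in
  let q := remZ (Posz (ni * v)) nk in
  let I := (p * q + ni - 1) %/ ni in
  let f := fun alpha : nat =>
    (Posz (alpha * nj) - Posz (p * ((alpha * nk) %/ q)))%R in
  exists (c alpha : nat),
    is_ck ni nj nk c /\
    1 <= alpha <= I /\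
    (forall beta : nat, 1 <= beta <= I -> (f alpha <= f beta)%R) /\
    f alpha = Posz c.
Proof.
move=> ni0 nj0 nk0 Hmin Hu Hv p q I f.
have IE : I = (p*q+ni-1) %/ ni by [].
have fE0 : forall beta, f beta = (Posz (beta*nj) - Posz (p*(beta*nk %/ q)))%R by [].
clearbody f I.
rewrite /is_inv_mod in Hu Hv.
have [plt pdvd] := @remZ_neg (ni*u) nj nj0.
rewrite -/p in plt pdvd.
have qE : q = ni*v %% nk by rewrite /q remZ_nat.
clearbody p q.
have dv : nj %| p*nk + ni.
  have h1 : ni = ni*(nk*u) %[mod nj] by rewrite -modnMmr Hu modnMmr muln1.
  have h2 : p*nk + ni = (p + ni*u)*nk %[mod nj].
    rewrite -modnDmr h1 modnDmr; congr (_ %% _); ring.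
  by rewrite /dvdn h2 -modnMml (eqP pdvd) mul0n mod0n.
set r := (p*nk+ni) %/ nj.
have rE : r*nj = p*nk + ni := divnK dv.
have rlt : r < nk.
  rewrite ltnNge; apply/negP => hr; apply: Hmin.
  exists (r - nk), (nj - p); rewrite mulnBl mulnBl.
  have := leq_mul hr (leqnn nj); have := leq_mul (ltnW plt) (leqnn nk).
  move=> h1 h2; move: rE h1 h2; clearbody r; clear; lia.
have rq : r = q.
  rewrite qE -(modn_small rlt) -[r]muln1 -modnMmr -Hv modnMmr mulnA rE.
  have -> : (p*nk+ni)*v = (p*v)*nk + ni*v by ring.
  by rewrite modnMDl.
have key : p*nk + ni = q*nj by rewrite -rE rq.
have q0 : 0 < q by rewrite lt0n; apply/eqP => h; rewrite h in key; clear -key ni0; lia.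
have p0 : 0 < p.
  rewrite lt0n; apply/eqP => h; rewrite h in key; apply: Hmin; exists q, 0; clear -key; lia.
have [c [[c0 Sc] cmin]] : exists c, (0 < c /\ Sk ni nj nk c) /\
    forall k, (0 < k /\ Sk ni nj nk k) -> c <= k.
  apply: (@ex_min _ nj); split=> //; exists 0, nk; ring.
have cmin' : forall k, 0 < k -> Sk ni nj nk k -> c <= k.
  by move=> k k0 Sk'; apply: cmin.
have Hck : is_ck ni nj nk c by [].
have gf := fun beta => gfacts ni nj nk p q beta q0 key.
have gpos : forall beta, 0 < beta -> 0 < beta*nj - p*(beta*nk %/ q).
  move=> beta b0; have [_ [h2 _]] := gf beta.
  by rewrite -(ltn_pmul2l q0) muln0 h2 ltn_addr // muln_gt0 b0 ni0.
have gS : forall beta, 0 < beta -> c <= beta*nj - p*(beta*nk %/ q).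
  move=> beta b0; apply: cmin'; first exact: gpos.
  have [_ [_ h3]] := gf beta.
  by exists (beta*nk %/ q), (beta*nk %% q).
have fE : forall beta, f beta = Posz (beta*nj - p*(beta*nk %/ q)).
  by move=> beta; have [h1 _] := gf beta; rewrite fE0 subzn.
case: Sc => a [b Hc].
have blt : b < q.
  rewrite ltnNge; apply/negP => hb.
  have := leq_mul hb (leqnn nj) => hbq.
  have cp : p < c.
    by rewrite -(ltn_pmul2r nk0); clear -Hc hbq key ni0; lia.
  have : c <= c - p.
    apply: cmin'; first by rewrite subn_gt0.
    exists a.+1, (b - q); rewrite mulnBl mulnBl.
    have := leq_mul (ltnW cp) (leqnn nk).
    clear -Hc hbq key; lia.
  clear -p0 cp; lia.
have E : (c + p*a)*nk = (a*q + b)*nj.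
  rewrite mulnDl Hc mulnDl -[a*q*nj]mulnA -key; ring.
have dvc : nj %| c + p*a.
  rewrite /dvdn -[c + p*a]muln1 -modnMmr -Hu modnMmr mulnA E mulnAC.
  by rewrite modnMl.
set alpha := (c + p*a) %/ nj.
have aE : alpha*nj = c + p*a := divnK dvc.
have aE2 : alpha*nk = a*q + b.
  apply/eqP; rewrite -(eqn_pmul2r nj0) -E -aE; apply/eqP; ring.
have adiv : alpha*nk %/ q = a by rewrite aE2 divnMDl // divn_small // addn0.
have amod : alpha*nk %% q = b by rewrite aE2 modnMDl modn_small.
have fa : f alpha = Posz c by rewrite fE adiv aE addnK.
have a0 : 0 < alpha.
  by rewrite lt0n; apply/eqP => h; move: aE; rewrite h mul0n; clear -c0; lia.
exists c, alpha; split=> //.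
split; last split.
- rewrite a0 /= IE leq_divRL //.
  have [_ [h2 _]] := gf alpha.
  rewrite adiv amod aE addnK in h2.
  have [_ [h1' _]] := gf 1.
  have g1 := gS 1 isT.
  have tl : 1*nk %% q < q := ltn_pmod _ q0.
  move: h1' g1 tl.
  set g1 := 1*nj - _; set t1 := 1*nk %% q => h1' g1c tl.
  have := leq_mul (leqnn q) g1c.
  have ptl : p * t1 < p * q by rewrite ltn_pmul2l.
  have := muln_gt0 p q; rewrite p0 q0 /= => pq0.
  clear -h2 h1' ptl pq0; lia.
- by move=> beta /andP [b1 _]; rewrite fa fE lez_nat; apply: gS.
- exact fa.
Qed.

Lemma in_mon2_sym a b x : in_mon2 a b x -> in_mon2 b a x.
Proof. by case=> t1 [t2 ->]; exists t2, t1; rewrite addnC. Qed.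

Theorem mainTheorem4 (n1 n2 n3 : nat) :
  0 < n1 -> 0 < n2 -> 0 < n3 ->
  coprime n1 n2 -> coprime n1 n3 -> coprime n2 n3 ->
  minimal_gens3 n1 n2 n3 ->
  forall i j k : 'I_3, i != j -> j != k -> i != k ->
  let ni := nth3 n1 n2 n3 i in
  let nj := nth3 n1 n2 n3 j in
  let nk := nth3 n1 n2 n3 k in
  forall u v : nat, is_inv_mod nj nk u -> is_inv_mod nk nj v ->
  let p := remZ (- Posz (ni * u))%R nj in   (* [-n_i n_k^{-1}]_{n_j} *)
  let q := remZ (Posz (ni * v)) nk in         (* [n_i n_j^{-1}]_{n_k} *)
  let I := (p * q + ni - 1) %/ ni in      (* ceil (p * q / n_i) *)
  let f := fun alpha : nat =>
    (Posz (alpha * nj) - Posz (p * ((alpha * nk) %/ q)))%R in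
  exists (c alpha : nat),
    is_ck ni nj nk c /\
    1 <= alpha <= I /\
    (forall beta : nat, 1 <= beta <= I -> (f alpha <= f beta)%R) /\
    f alpha = Posz c.
Proof.
move=> n10 n20 n30 _ _ _ [m1 [m2 m3]] i j k hij hjk hik.
have pos : forall x : 'I_3, 0 < nth3 n1 n2 n3 x.
  by case=> [[|[|[|x]]] hx] //.
have Hm : ~ in_mon2 (nth3 n1 n2 n3 j) (nth3 n1 n2 n3 k) (nth3 n1 n2 n3 i).
  move: hij hjk hik.
  case: i => [[|[|[|i]]] hi] //; case: j => [[|[|[|j]]] hj] //;
  case: k => [[|[|[|k]]] hk] //= _ _ _; rewrite /nth3 /=;
  first [exact m1 | exact m2 | exact m3 | move=> /in_mon2_sym; first [exact m1|exact m2|exact m3]].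
move=> ni nj nk u v Hu Hv.
exact: core (pos i) (pos j) (pos k) Hm Hu Hv.
Qed.
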